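(* Let $\approx$ be an equinumerosity on $\mathbb{W}$. Then: (i) For $A,B\in\mathbb{W}$, $A\prec B$ holds if and only if $B\approx B'$ for some $B'\in\mathbb{W}$ that is a proper superset of $A$. Hence, given any two sets in $\mathbb{W}$, one of them is equinumerous (w.r.t. $\approx$) to a superset of the other. (ii) The relation $\prec$ is a (strict) preorder on $\mathbb{W}$ which induces a total ordering on the quotient set $\mathbb{W}/\approx$.
   Context: Let $\mathbb N=\{0,1,2,\dots\}$. Let $\mathbb{W}$ be the family of finitary point sets: sets $A\subseteq\bigcup_{k\ge1}\mathbb N^k$ of finite tuples of natural numbers (tuples of different lengths allowed) such that for every $n\in\mathbb N$ there is $h$ with $A\cap\{0,\dots,n\}^k=\emptyset$ for all $k>h$. Cartesian products are identified with concatenations: for point sets $A,B$, $A\times B=\{(a_1,\dots,a_k,b_1,\dots,b_h):(a_1,\dots,a_k)\in A,\ (b_1,\dots,b_h)\in B\}$; $\{n\}$ denotes the set whose only element is the 1-tuple $(n)$. $A,B\in\mathbb W$ are multipliable if distinct pairs $(a,b)\in A\times B$ (as pairs of tuples) have distinct concatenations. Given an equivalence relation $\approx$ on $\mathbb W$, write $A\succ B$, equivalently $B\prec A$, if there exist $A',B'\in\mathbb W$ with $B'\subsetneq A'$, $A\approx A'$ and $B\approx B'$. An equinumerosity is an equivalence relation $\approx$ on $\mathbb W$ such that for all $A,B\in\mathbb W$: (AP) $A\approx B$ iff $A\setminus B\approx B\setminus A$; (ZP) exactly one of $A\approx B$, $A\succ B$, $A\prec B$ holds; (TP) if $T$ is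 injective on $A$ and $T(a)$ is a permutation of the coordinates of $a$ for every $a\in A$, then $A\approx T[A]$; (UP) $A\times\{n\}\approx A$ for all $n\in\mathbb N$; (PP) if $A,B$ are multipliable, $A',B'$ are multipliable, $A\approx A'$ and $B\approx B'$, then $A\times B\approx A'\times B'$. *)

(* Defs.v *)
From mathcomp Require Import all_boot.
Set Implicit Arguments. Unset Strict Implicit. Unset Printing Implicit Defensive.

Definition pset := seq nat -> Prop.

Definition inW (A : pset) : Prop :=
  (forall x, A x -> 0 < size x) /\
  (forall n : nat, exists h : nat, forall x, A x -> h < size x ->
       ~ (all (fun a => a <= n) x)).

Definition psubset (A B : pset) : Prop := forall x, A x -> B x.
Definition proper_subset (A B : pset) : Prop := psubset A B /\ ~ psubset B A.
Definition setminus (A B : pset) : pset := fun x => A x /\ ~ B x.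

(* Cartesian product = set of concatenations. *)
Definition pprod (A B : pset) : pset :=
  fun z => exists a b, A a /\ B b /\ z = a ++ b.

Definition psing (n : nat) : pset := fun z => z = [:: n].

Definition multipliable (A B : pset) : Prop :=
  forall a b a' b', A a -> B b -> A a' -> B b' -> a ++ b = a' ++ b' ->
    a = a' /\ b = b'.

Definition pimage (T : seq nat -> seq nat) (A : pset) : pset :=
  fun y => exists a, A a /\ y = T a.

Definition equiv_on_W (R : pset -> pset -> Prop) : Prop :=
  (forall A, inW A -> R A A) /\
  (forall A B, inW A -> inW B -> R A B -> R B A) /\
  (forall A B C, inW A -> inW B -> inW C -> R A B -> R B C -> R A C).

Definition psucc (R : pset -> pset -> Prop) (A B : pset) : Prop :=
  exists A' B', inW A' /\ inW B' /\ proper_subset B' A' /\ R A A' /\ R B B'.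

Definition pprec (R : pset -> pset -> Prop) (A B : pset) : Prop := psucc R B A.

Definition equinumerosity (R : pset -> pset -> Prop) : Prop :=
  equiv_on_W R /\
  (forall A B, inW A -> inW B -> (R A B <-> R (setminus A B) (setminus B A))) /\
  (forall A B, inW A -> inW B ->
     (R A B /\ ~ psucc R A B /\ ~ pprec R A B) \/
     (~ R A B /\ psucc R A B /\ ~ pprec R A B) \/
     (~ R A B /\ ~ psucc R A B /\ pprec R A B)) /\
  (forall (A : pset) (T : seq nat -> seq nat), inW A ->
     (forall a a', A a -> A a' -> T a = T a' -> a = a') ->
     (forall a, A a -> perm_eq (T a) a) ->
     R A (pimage T A)) /\
  (forall A (n : nat), inW A -> R (pprod A (psing n)) A) /\
  (forall A B A' B', inW A -> inW B -> inW A' -> inW B' ->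
     multipliable A B -> multipliable A' B' -> R A A' -> R B B' ->
     R (pprod A B) (pprod A' B')).

(* Main.v *)
Require Import Defs.
From mathcomp Require Import all_boot zify.
From Stdlib Require Import Classical FunctionalExtensionality PropExtensionality.
Set Implicit Arguments. Unset Strict Implicit.

Definition punion (A B : pset) : pset := fun x => A x \/ B x.

Lemma pset_ext (A B : pset) : (forall x, A x <-> B x) -> A = B.
Proof. move=> H; apply: functional_extensionality => x; apply: propositional_extensionality; exact: H. Qed.

Lemma inW_sub A B : inW B -> psubset A B -> inW A.
Proof.
move=> [H1 H2] S; split; first by move=> x /S /H1.
move=> n; have [h Hh] := H2 n; exists h => x /S; exact: Hh.
Qed.

Lemma inW_union A B : inW A -> inW B -> inW (punion A B).
Proof.
move=> [A1 A2] [B1 B2]; split; first by move=> x [/A1|/B1].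
move=> n; have [h1 H1] := A2 n; have [h2 H2] := B2 n.
exists (maxn h1 h2) => x [Ax|Bx] Hs.
- apply: H1 => //; lia.
- apply: H2 => //; lia.
Qed.

Lemma least_ex (P : nat -> Prop) : (exists k, P k) -> exists k, P k /\ forall i, i < k -> ~ P i.
Proof.
move=> [k Pk].
case: (classic (exists k, P k /\ forall i, i<k -> ~P i)) => // H. exfalso.
have: forall n m, m <= n -> ~ P m.
  elim=> [|n IH] m Hm Pm; apply: H; exists m; split=>// i Hi.
  - lia.
  - apply: IH; lia.
by move/(_ k k (leqnn k)).
Qed.

Lemma nseqS0 j : nseq j 0 ++ [:: 0] = nseq j.+1 0.
Proof. by elim: j => //= j ->. Qed.

Lemma last_nseq0 y m : last y (nseq m.+1 0) = 0.
Proof. by elim: m y => //= m IH y; rewrite -(IH 0). Qed.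

Lemma neq_last s t j : 0 < j -> s ++ [:: 1] <> t ++ nseq j 0.
Proof.
case: j => // j _ E; have := congr1 (last 0) E; rewrite !last_cat last_nseq0 //.
Qed.

Lemma all_le_max t : all (fun a => a <= foldr maxn 0 t) t.
Proof.
elim: t => //= a t IH; rewrite leq_maxl /=.
apply: (sub_all _ IH) => x Hx; exact: leq_trans Hx (leq_maxr _ _).
Qed.
Lemma Rsym R (HR : equinumerosity R) A B : inW A -> inW B -> R A B -> R B A.
Proof. case: HR => [[_ [H _]] _]; exact: H. Qed.
Lemma Rrefl R (HR : equinumerosity R) A : inW A -> R A A.
Proof. case: HR => [[H _] _]; exact: H. Qed.
Lemma Rtrans R (HR : equinumerosity R) A B C : inW A -> inW B -> inW C -> R A B -> R B C -> R A C.
Proof. case: HR => [[_ [_ H]] _]; exact: H. Qed.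

Lemma AP_fwd R (HR : equinumerosity R) X Y P Q : inW X -> inW Y ->
  (forall x, (X x /\ ~ Y x) <-> P x) -> (forall x, (Y x /\ ~ X x) <-> Q x) ->
  R X Y -> R P Q.
Proof.
move=> WX WY HP HQ HXY.
have -> : P = setminus X Y by apply: pset_ext => x; rewrite -HP.
have -> : Q = setminus Y X by apply: pset_ext => x; rewrite -HQ.
case: HR => [_ [AP _]]; exact: (proj1 (AP X Y WX WY)).
Qed.

Lemma AP_bwd R (HR : equinumerosity R) X Y P Q : inW X -> inW Y ->
  (forall x, (X x /\ ~ Y x) <-> P x) -> (forall x, (Y x /\ ~ X x) <-> Q x) ->
  R P Q -> R X Y.
Proof.
move=> WX WY HP HQ HPQ.
have EP : P = setminus X Y by apply: pset_ext => x; rewrite -HP.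
have EQ : Q = setminus Y X by apply: pset_ext => x; rewrite -HQ.
case: HR => [_ [AP _]]; apply: (proj2 (AP X Y WX WY)); by rewrite -EP -EQ.
Qed.

Lemma sum_lemma R (HR : equinumerosity R) X X' Y Y' :
  inW X -> inW X' -> inW Y -> inW Y' -> R X X' -> R Y Y' ->
  (forall x, X x -> ~ Y x) -> (forall x, X' x -> ~ Y x) -> (forall x, X' x -> ~ Y' x) ->
  R (punion X Y) (punion X' Y').
Proof.
move=> WX WX' WY WY' RX RY D1 D2 D3.
have WXY := inW_union WX WY. have WX'Y := inW_union WX' WY. have WX'Y' := inW_union WX' WY'.
apply: (Rtrans HR WXY WX'Y WX'Y').
- apply: (AP_bwd HR (P := setminus X X') (Q := setminus X' X)) => //.
  + rewrite /punion /setminus => x; split; [tauto|]. move=> [Hx Hn]; split; [tauto|].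
    move=> [//|]; exact: D1.
  + rewrite /punion /setminus => x; split; [tauto|]. move=> [Hx Hn]; split; [tauto|].
    move=> [//|]; exact: D2.
  + case: HR => [_ [AP _]]; exact: (proj1 (AP X X' WX WX') RX).
- apply: (AP_bwd HR (P := setminus Y Y') (Q := setminus Y' Y)) => //.
  + rewrite /punion /setminus => x; split; [tauto|]. move=> [Hx Hn]; split; [tauto|].
    move=> [H|//]; exact: (D2 _ H Hx).
  + rewrite /punion /setminus => x; split; [tauto|]. move=> [Hx Hn]; split; [tauto|].
    move=> [H|//]; exact: (D3 _ H Hx).
  + case: HR => [_ [AP _]]; exact: (proj1 (AP Y Y' WY WY') RY).
Qed.
Lemma fresh R (HR : equinumerosity R) S T : inW S -> inW T ->
  exists F, inW F /\ R S F /\ (forall x, F x -> ~ T x) /\ ((exists s, S s) -> exists y, F y).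
Proof.
move=> WS WT.
pose S1 := pprod S (psing 1).
pose Big : pset := fun z => exists t j, S1 t /\ z = t ++ nseq j 0 /\
   (forall i, 0 < i -> i < j -> T (t ++ nseq i 0)).
pose Y : pset := fun z => exists t k, S1 t /\ z = t ++ nseq k 0 /\ 0 < k /\ ~ T z /\
   (forall i, 0 < i -> i < k -> T (t ++ nseq i 0)).
pose Z : pset := fun z => exists t j, S1 t /\ z = t ++ nseq j 0 /\ 0 < j /\
   (forall i, 0 < i -> i <= j -> T (t ++ nseq i 0)).
have WBig : inW Big.
  case: WS => [S1p S2]; case: WT => [T1 T2]; split.
  - move=> z [t [j [[s [b [_ [-> ->]]] [-> _]]]]]; rewrite !size_cat /=; lia.
  - move=> n; have [hS HS] := S2 n; have [hT HT] := T2 n.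
    exists (maxn (hS + 2) (hT + 1)) => z [t [j [[s [b [Ss [-> ->]]] [-> HTi]]]]] Hsz Hall.
    rewrite !all_cat in Hall; move/andP: Hall => [/andP [Hs H1] Hn].
    have Hss : size s <= hS.
      case: (leqP (size s) hS) => // Hlt; exfalso; exact: (HS s Ss Hlt Hs).
    rewrite !size_cat size_nseq /= in Hsz.
    case: (leqP j 1) => Hj; first lia.
    have HT' := HTi j.-1 ltac:(lia) ltac:(lia).
    apply: (HT _ HT'); last by rewrite !all_cat Hs H1 /= all_nseq /= orbT.
    rewrite !size_cat size_nseq /=; lia.
have WS1 : inW S1.
  apply: (inW_sub WBig) => z Hz; exists z, 0; rewrite cats0; split=> //; split=> //; lia.
have WY : inW Y.
  apply: (inW_sub WBig) => z [t [k [H1 [H2 [_ [_ H3]]]]]]; by exists t, k.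
have WZ : inW Z.
  apply: (inW_sub WBig) => z [t [k [H1 [H2 [_ H3]]]]]; exists t, k; split=>//; split=>// i ? ?.
  apply: H3 => //; lia.
have pre : forall t j, S1 t -> (forall i, 0 < i -> i <= j -> T (t ++ nseq i 0)) ->
     punion S1 Z (t ++ nseq j 0).
  move=> t [|j] St Hi; first by left; rewrite cats0.
  right; exists t, j.+1; split=> //; split=> //.
have Eq : pprod (punion S1 Z) (psing 0) = punion Z Y.
  apply: pset_ext => z; split.
  - move=> [w [b [Hw [-> ->]]]].
    have [t [j [St [-> Hi]]]] : exists t j, S1 t /\ w = t ++ nseq j 0 /\
         (forall i, 0 < i -> i <= j -> T (t ++ nseq i 0)).
      case: Hw => [Hw|[t [j [St [-> [_ Hi]]]]]]; last by exists t, j.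
      exists w, 0; rewrite cats0; split=> //; split=> // i; lia.
    rewrite -catA nseqS0.
    case: (classic (T (t ++ nseq j.+1 0))) => HT.
    + left; exists t, j.+1; split=> //; split=> //; split=> // i Hi0 Hij.
      case: (ltngtP i j.+1) => Hc; [apply: Hi => //; lia | lia | by rewrite Hc].
    + right; exists t, j.+1; do 4 (split; first done). move=> i Hi0 Hij. idtac.
      apply: Hi => //; lia.
  - move=> [[t [j [St [-> [Hj Hi]]]]] | [t [j [St [-> [Hj [_ Hi]]]]]]];
      (case: j Hj Hi => [//|j] _ Hi; exists (t ++ nseq j 0), [:: 0];
       split; [apply: pre => // i ? ?; apply: Hi => //; lia | split=> //];
       by rewrite -catA nseqS0).
have WU1 : inW (punion S1 Z) := inW_union WS1 WZ.
have WU2 : inW (punion Z Y) := inW_union WZ WY.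
have RU : R (punion S1 Z) (punion Z Y).
  rewrite -Eq; apply: Rsym => //; first by rewrite Eq.
  case: HR => [_ [_ [_ [_ [UP _]]]]]; exact: UP.
have RS1Y : R S1 Y.
  apply: (AP_fwd HR WU1 WU2 _ _ RU).
  - move=> x; rewrite /punion; split; first tauto.
    move=> Hx; split; first tauto.
    case: Hx => [s [b [_ [Hb Ex]]]]; rewrite /psing in Hb; subst.
    move=> [[t [j [_ [E [Hj _]]]]] | [t [j [_ [E [Hj _]]]]]]; exact: (neq_last Hj E).
  - move=> x; rewrite /punion; split; first tauto.
    move=> Hx; split; first tauto.
    move=> [[s [b [_ [Hb Ex]]]] | [t [j [_ [E [Hj Hi]]]]]].
    + rewrite /psing in Hb; subst; case: Hx => [t [k [_ [E' [Hk _]]]]]; exact: (neq_last Hk E').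
    + case: Hx => [t' [k [_ [E' [_ [HnT _]]]]]]; apply: HnT; rewrite E; exact: Hi.
have RSS1 : R S S1.
  apply: Rsym => //; case: HR => [_ [_ [_ [_ [UP _]]]]]; exact: UP.
exists Y; split=> //; split; first exact: (Rtrans HR WS WS1 WY RSS1 RS1Y).
split.
  by move=> x [t [k [_ [_ [_ [HnT _]]]]]].
move=> [s Ss].
pose t := s ++ [:: 1].
have St : S1 t by exists s, [:: 1].
have [k [[Hk HnT] Hmin]] : exists k, (0 < k /\ ~ T (t ++ nseq k 0)) /\
     forall i, i < k -> ~ (0 < i /\ ~ T (t ++ nseq i 0)).
  apply: least_ex.
  case: WT => [_ T2]; have [h Hh] := T2 (foldr maxn 0 t).
  exists h.+1; split=> //; move=> HT; apply: (Hh _ HT).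
    rewrite size_cat size_nseq; lia.
  by rewrite all_cat all_le_max /= all_nseq orbT.
exists (t ++ nseq k 0), t, k; split=> //; split=> //; split=> //; split=> // i Hi0 Hik.
apply: NNPP => HnTi; exact: (Hmin i Hik (conj Hi0 HnTi)).
Qed.
Lemma extend R (HR : equinumerosity R) X X' Y' : inW X -> inW X' -> inW Y' ->
  R X X' -> psubset X' Y' -> exists Y, inW Y /\ psubset X Y /\ R Y Y' /\
  ((exists y, Y' y /\ ~ X' y) -> exists y, Y y /\ ~ X y).
Proof.
move=> WX WX' WY' RX Hsub.
have WE : inW (setminus Y' X') by apply: (inW_sub WY') => x [].
have [F [WF [REF [HFT HFne]]]] := fresh HR WE (inW_union WX WX').
exists (punion X F); split; first exact: inW_union.
split; first by move=> x Hx; left.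
split.
  have -> : Y' = punion X' (setminus Y' X').
    apply: pset_ext => x; rewrite /punion /setminus; split.
      move=> Hx; case: (classic (X' x)) => ?; tauto.
    by move=> [/Hsub|[]].
  apply: sum_lemma => //; first exact: Rsym.
  - by move=> x Hx HF; apply: (HFT x HF); left.
  - by move=> x Hx HF; apply: (HFT x HF); right.
  - by move=> x Hx [].
move=> Hne; have [y Fy] := HFne Hne.
exists y; split; first by right.
by move=> Xy; apply: (HFT y Fy); left.
Qed.

Lemma prec_iff R (HR : equinumerosity R) A B : inW A -> inW B ->
  (pprec R A B <-> exists B', inW B' /\ R B B' /\ proper_subset A B').
Proof.
move=> WA WB; split.
- move=> [A0 [B0 [WA0 [WB0 [[Hs Hns] [RBA0 RAB0]]]]]].
  have [Y [WY [HAY [RY Hne]]]] := extend HR WA WB0 WA0 RAB0 Hs.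
  exists Y; split=> //; split; first exact: (Rtrans HR WB WA0 WY RBA0 (Rsym HR WY WA0 RY)).
  split=> // HYA.
  have [y [Ay nBy]] : exists y, A0 y /\ ~ B0 y.
    apply: NNPP => H; apply: Hns => x Ax; apply: NNPP => nB; apply: H; by exists x.
  have [z [Yz nAz]] := Hne (ex_intro _ y (conj Ay nBy)).
  exact: nAz (HYA z Yz).
- move=> [B' [WB' [RBB' HAB']]].
  exists B', A; do 4 (split => //); exact: Rrefl.
Qed.

Unset Implicit Arguments.
Theorem proposition1p4 (R : pset -> pset -> Prop) :
  equinumerosity R ->
  (* (i) *)
  ((forall A B, inW A -> inW B ->
      (pprec R A B <-> exists B', inW B' /\ R B B' /\ proper_subset A B')) /\
   (forall A B, inW A -> inW B ->
      (exists B', inW B' /\ R B B' /\ psubset A B') \/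
      (exists A', inW A' /\ R A A' /\ psubset B A'))) /\
  (* (ii) strict preorder on W, inducing a total order on W/≈ *)
  ((forall A, inW A -> ~ pprec R A A) /\
   (forall A B C, inW A -> inW B -> inW C ->
      pprec R A B -> pprec R B C -> pprec R A C) /\
   (forall A A' B B', inW A -> inW A' -> inW B -> inW B' ->
      R A A' -> R B B' -> pprec R A B -> pprec R A' B') /\
   (forall A B, inW A -> inW B -> R A B \/ pprec R A B \/ pprec R B A)).
Proof.
move=> HR.
have ZP : forall A B, inW A -> inW B ->
     (R A B /\ ~ psucc R A B /\ ~ pprec R A B) \/
     (~ R A B /\ psucc R A B /\ ~ pprec R A B) \/
     (~ R A B /\ ~ psucc R A B /\ pprec R A B).
  by case: HR => [_ [_ [ZP _]]].
split; first split.
- exact: prec_iff.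
- move=> A B WA WB.
  case: (ZP A B WA WB) => [[RAB _]|[[_ [Hs _]]|[_ [_ Hp]]]].
  + left; exists A; split=> //; split=> //; exact: Rsym.
  + right; have [A' [WA' [RA' [Hsub _]]]] := proj1 (prec_iff HR WB WA) Hs.
    by exists A'.
  + left; have [B' [WB' [RB' [Hsub _]]]] := proj1 (prec_iff HR WA WB) Hp.
    by exists B'.
split.
  move=> A WA; case: (ZP A A WA WA) => [[_ [_ H]]|[[H _]|[H _]]] //;
  by case: H; apply: Rrefl.
split.
  move=> A B C WA WB WC HAB HBC.
  have [B1 [WB1 [RB1 [HAB1 HnB1]]]] := proj1 (prec_iff HR WA WB) HAB.
  have [C1 [WC1 [RC1 [HBC1 HnC1]]]] := proj1 (prec_iff HR WB WC) HBC.
  have [Y [WY [HB1Y [RY _]]]] := extend HR WB1 WB WC1 (Rsym HR WB WB1 RB1) HBC1.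
  apply/(prec_iff HR WA WC); exists Y; split=> //; split.
    exact: (Rtrans HR WC WC1 WY RC1 (Rsym HR WY WC1 RY)).
  split; first by move=> x /HAB1 /HB1Y.
  move=> HYA; apply: HnB1 => x /HB1Y; exact: HYA.
split.
  move=> A A' B B' WA WA' WB WB' RAA' RBB' [B0 [A0 [WB0 [WA0 [Hs [RB0 RA0]]]]]].
  exists B0, A0; do 2 (split => //); split => //; split.
  + exact: (Rtrans HR WB' WB WB0 (Rsym HR WB WB' RBB') RB0).
  + exact: (Rtrans HR WA' WA WA0 (Rsym HR WA WA' RAA') RA0).
move=> A B WA WB; case: (ZP A B WA WB) => [[H _]|[[_ [H _]]|[_ [_ H]]]]; tauto.
Qed.
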